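(* Let $\mathcal{H}$ be a complex Hilbert space and let $T\in\mathcal{B}(\mathcal{H})$ be a completely hyperexpansive operator which is $A_j(T)$-regular for $j=1,2,3$, where $A_n(T)=-\sum_{k=0}^n(-1)^k\binom{n}{k}T^{*k}T^k$. Then the compression $P_{\overline{\mathcal{R}(A_2(T))}}T|_{\overline{\mathcal{R}(A_2(T))}}$ of $T$ to $\overline{\mathcal{R}(A_2(T))}$ is a completely non-isometric quasinormal contraction.
   Context: $T$ is completely hyperexpansive if $\sum_{k=0}^n(-1)^k\binom{n}{k}T^{*k}T^k\le0$ for all $n\ge1$; note $A_1(T)=T^*T-I$. For a positive operator $A$, $T$ is $A$-regular if $AT=A^{1/2}TA^{1/2}$. An operator $Q$ is quasinormal if $QQ^*Q=Q^*Q^2$. A contraction is completely non-isometric if there is no nonzero invariant subspace on which it acts isometrically. *)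

(* Defs.v *)
From HB Require Import structures.
From mathcomp Require Import all_boot all_order all_algebra.
From mathcomp Require Import complex.
From mathcomp Require Import reals.
Set Implicit Arguments. Unset Strict Implicit. Unset Printing Implicit Defensive.
Import Order.TTheory GRing.Theory Num.Theory.
Local Open Scope ring_scope.

Section Hilbert.
Variables (R : realType) (V : lmodType R[i]) (inner : V -> V -> R[i]).

Definition nsq (x : V) : R := complex.Re (inner x x).

Definition is_hilbert : Prop :=
  [/\ (forall (a : R[i]) (x y z : V), inner (a *: x + y) z = a * inner x z + inner y z),
      (forall x y : V, inner y x = complex.conjc (inner x y)),
      (forall x : V, complex.Im (inner x x) = 0 /\ 0 <= complex.Re (inner x x)),
      (forall x : V, inner x x = 0 -> x = 0) &
      (forall u : nat -> V,
         (forall e : R, 0 < e -> exists N, forall m n, (N <= m)%N -> (N <= n)%N ->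
              nsq (u m - u n) < e) ->
         exists l : V, forall e : R, 0 < e -> exists N, forall n, (N <= n)%N ->
              nsq (u n - l) < e)].

Definition bounded (T : V -> V) : Prop :=
  exists K : R, forall x, nsq (T x) <= K * nsq x.

Definition is_adjoint (T Tstar : V -> V) : Prop :=
  forall x y, inner (T x) y = inner x (Tstar y).

Definition pos_op (B : V -> V) : Prop :=
  forall x, complex.Im (inner (B x) x) = 0 /\ 0 <= complex.Re (inner (B x) x).

Definition Aop (T Tstar : V -> V) (n : nat) : V -> V :=
  fun x => - \sum_(k < n.+1) ((-1) ^+ k * ('C(n, k))%:R) *: iter k Tstar (iter k T x).

Definition completely_hyperexpansive (T Tstar : V -> V) : Prop :=
  forall n, (1 <= n)%N -> pos_op (Aop T Tstar n).

Definition is_pos_sqrt (A B : V -> V) : Prop :=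
  linear B /\ bounded B /\ pos_op B /\ (forall x, B (B x) = A x).

Definition regular (A T : V -> V) : Prop :=
  exists B, is_pos_sqrt A B /\ forall x, A (T x) = B (T (B x)).

Definition subspace (M : V -> Prop) : Prop :=
  M 0 /\ (forall (a : R[i]) x y, M x -> M y -> M (a *: x + y)).
Definition closed (M : V -> Prop) : Prop :=
  forall x, (forall e : R, 0 < e -> exists y, M y /\ nsq (x - y) < e) -> M x.

Definition closure_range (B : V -> V) : V -> Prop :=
  fun x => forall e : R, 0 < e -> exists y, nsq (x - B y) < e.

Definition orth_proj (M : V -> Prop) (P : V -> V) : Prop :=
  forall x, M (P x) /\ (forall y, M y -> inner (x - P x) y = 0).

(* Operators S on the (closed) subspace M, represented as maps V -> V
   sending M into M, only their values on M being relevant. *)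
Definition maps_into (M : V -> Prop) (S : V -> V) : Prop := forall x, M x -> M (S x).

Definition adjoint_on (M : V -> Prop) (S Sstar : V -> V) : Prop :=
  maps_into M Sstar /\ forall x y, M x -> M y -> inner (S x) y = inner x (Sstar y).

Definition contraction_on (M : V -> Prop) (S : V -> V) : Prop :=
  forall x, M x -> nsq (S x) <= nsq x.

Definition quasinormal_on (M : V -> Prop) (S : V -> V) : Prop :=
  forall Sstar, adjoint_on M S Sstar ->
    forall x, M x -> S (Sstar (S x)) = Sstar (S (S x)).

Definition completely_non_isometric_on (M : V -> Prop) (S : V -> V) : Prop :=
  forall N : V -> Prop, subspace N -> closed N -> (forall x, N x -> M x) ->
    maps_into N S -> (forall x, N x -> nsq (S x) = nsq x) ->
    forall x, N x -> x = 0.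

End Hilbert.

(* Main.v *)
Require Import Defs.
From HB Require Import structures.
From mathcomp Require Import all_boot all_order all_algebra.
From mathcomp Require Import complex.
From mathcomp Require Import reals.
From mathcomp Require Import ring lra.
Import Order.TTheory GRing.Theory Num.Theory.
Local Open Scope ring_scope.
Local Open Scope complex_scope.
Set Implicit Arguments. Unset Strict Implicit. Unset Printing Implicit Defensive.

Section Cplx.
Variable R : realType.
Implicit Types x y : R[i].
Lemma ReD x y : complex.Re (x + y) = complex.Re x + complex.Re y.
Proof. by case: x => a b; case: y. Qed.
Lemma ImD x y : complex.Im (x + y) = complex.Im x + complex.Im y.
Proof. by case: x => a b; case: y. Qed.
Lemma ReN x : complex.Re (- x) = - complex.Re x.
Proof. by case: x. Qed.
Lemma ImN x : complex.Im (- x) = - complex.Im x.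
Proof. by case: x. Qed.
Lemma ReB x y : complex.Re (x - y) = complex.Re x - complex.Re y.
Proof. by rewrite ReD ReN. Qed.
Lemma Re0 : complex.Re (0 : R[i]) = 0. Proof. by []. Qed.
Lemma Re_conj x : complex.Re (conjc x) = complex.Re x.
Proof. by case: x. Qed.
Lemma Im_conj x : complex.Im (conjc x) = - complex.Im x.
Proof. by case: x. Qed.
Lemma ReMr (c : R) x : complex.Re (c%:C * x) = c * complex.Re x.
Proof. by case: x => a b /=; rewrite mul0r subr0. Qed.
Lemma ImMr (c : R) x : complex.Im (c%:C * x) = c * complex.Im x.
Proof. by case: x => a b /=; rewrite mul0r addr0. Qed.
Lemma Re_i x : complex.Re ('i%C * x) = - complex.Im x.
Proof. by case: x => a b /=; rewrite !mul0r mul1r ?add0r ?sub0r. Qed.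
Lemma cplx_ext x y : complex.Re x = complex.Re y -> complex.Im x = complex.Im y -> x = y.
Proof. by case: x => a b; case: y => c d /= -> ->. Qed.
Lemma cplx_real x : complex.Im x = 0 -> x = (complex.Re x)%:C.
Proof. by case: x => a b /= ->. Qed.
Lemma conj_real x : complex.Im x = 0 -> conjc x = x.
Proof. by case: x => a b /= ->; rewrite oppr0. Qed.
Lemma conjcK' x : conjc (conjc x) = x.
Proof. by case: x => a b /=; rewrite opprK. Qed.
Lemma conj_realC (c : R) : conjc (c%:C : R[i]) = c%:C.
Proof. by apply: conj_real. Qed.
End Cplx.

Section Inner.
Variables (R : realType) (V : lmodType R[i]) (inner : V -> V -> R[i]).
Hypothesis HV : is_hilbert inner.
Local Notation nsq := (nsq inner).

Lemma iL a x y z : inner (a *: x + y) z = a * inner x z + inner y z.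
Proof. by case: HV => h _ _ _ _; apply: h. Qed.
Lemma iC x y : inner y x = conjc (inner x y).
Proof. by case: HV => _ h _ _ _; apply: h. Qed.
Lemma i0l z : inner 0 z = 0.
Proof.
have := iL 1 0 0 z; rewrite scaler0 addr0 mul1r => h.
by apply: (addrI (inner 0 z)); rewrite addr0 -h.
Qed.
Lemma iDl x y z : inner (x + y) z = inner x z + inner y z.
Proof. by rewrite -[x]scale1r iL mul1r scale1r. Qed.
Lemma iZl a x z : inner (a *: x) z = a * inner x z.
Proof. by rewrite -[a *: x]addr0 iL i0l addr0. Qed.
Lemma iNl x z : inner (- x) z = - inner x z.
Proof. by rewrite -scaleN1r iZl mulN1r. Qed.
Lemma iBl x y z : inner (x - y) z = inner x z - inner y z.
Proof. by rewrite iDl iNl. Qed.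
Lemma i0r z : inner z 0 = 0.
Proof. by rewrite iC i0l rmorph0. Qed.
Lemma iDr x y z : inner z (x + y) = inner z x + inner z y.
Proof. by rewrite iC iDl rmorphD (iC x z) (iC y z). Qed.
Lemma iZr a x z : inner z (a *: x) = conjc a * inner z x.
Proof. by rewrite iC iZl rmorphM (iC x z). Qed.
Lemma iNr x z : inner z (- x) = - inner z x.
Proof. by rewrite iC iNl rmorphN (iC x z). Qed.
Lemma iBr x y z : inner z (x - y) = inner z x - inner z y.
Proof. by rewrite iDr iNr. Qed.
Lemma isum_l n (F : 'I_n -> V) z :
  inner (\sum_(i < n) F i) z = \sum_(i < n) inner (F i) z.
Proof.
elim/big_rec2: _ => [|i y1 y2 _ <-]; first by rewrite i0l.
by rewrite iDl.
Qed.
Lemma inner_self x : inner x x = (nsq x)%:C.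
Proof. by case: HV => _ _ h _ _; apply: cplx_real; case: (h x). Qed.
Lemma nsq_ge0 x : 0 <= nsq x.
Proof. by case: HV => _ _ h _ _; case: (h x). Qed.
Lemma ext_self w : inner w w = 0 -> w = 0.
Proof. by case: HV => _ _ _ h _; apply: h. Qed.
Lemma nsq_eq0 w : nsq w = 0 -> w = 0.
Proof. by move=> h; apply: ext_self; rewrite inner_self h. Qed.
Lemma ext a b : (forall y, inner a y = inner b y) -> a = b.
Proof.
move=> h; apply/eqP; rewrite -subr_eq0; apply/eqP; apply: ext_self.
by rewrite iBl h subrr.
Qed.
Lemma Re_inner_sym x y : complex.Re (inner y x) = complex.Re (inner x y).
Proof. by rewrite iC Re_conj. Qed.
Lemma nsqD a b : nsq (a + b) = nsq a + nsq b + 2 * complex.Re (inner a b).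
Proof.
rewrite /Defs.nsq iDl !iDr !ReD (Re_inner_sym a b); ring.
Qed.
Lemma nsqN a : nsq (- a) = nsq a.
Proof. by rewrite /Defs.nsq iNl iNr opprK. Qed.
Lemma nsqZr (c : R) a : nsq (c%:C *: a) = c ^+ 2 * nsq a.
Proof.
rewrite /Defs.nsq iZl iZr conj_realC mulrA.
have -> : (c%:C * c%:C : R[i]) = (c * c)%:C by rewrite rmorphM.
by rewrite ReMr expr2.
Qed.
Lemma young (d : R) a b : 2 * d * complex.Re (inner a b) <= d ^+ 2 * nsq a + nsq b.
Proof.
have := nsq_ge0 (d%:C *: a - b).
rewrite nsqD nsqN nsqZr iNr iZl ReN ReMr.
lra.
Qed.
Lemma nsq_add2 a b : nsq (a + b) <= 2 * nsq a + 2 * nsq b.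
Proof. have := young 1 a b; rewrite nsqD; lra. Qed.
Lemma nsq_sub2 a b : nsq (a - b) <= 2 * nsq a + 2 * nsq b.
Proof. by have := nsq_add2 a (- b); rewrite nsqN. Qed.
End Inner.

Section Real.
Variable R : realType.
Lemma le0_eps (x c : R) : (forall d : R, 0 < d -> x <= d * c) -> x <= 0.
Proof.
move=> h; rewrite leNgt; apply/negP => hx.
have hc : 0 < c by have := h 1 ltr01; rewrite mul1r => hh; exact: lt_le_trans hx hh.
have hd : 0 < x / (2 * c) by rewrite divr_gt0 // mulr_gt0.
have := h _ hd.
have -> : x / (2 * c) * c = x / 2 by field; rewrite gt_eqF.
lra.
Qed.
Lemma le0_archi (x c : R) : (forall n : nat, n%:R * x <= c) -> x <= 0.
Proof.
move=> h; rewrite leNgt; apply/negP => hx.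
have hc : 0 <= c by have := h 0%N; rewrite mul0r.
have := archi_boundP (divr_ge0 hc (ltW hx)).
set n := Num.Def.archi_bound _ => hn.
have := h n; rewrite leNgt => /negP; apply.
by rewrite -ltr_pdivrMr.
Qed.
End Real.

Section Proj.
Variables (R : realType) (V : lmodType R[i]) (inner : V -> V -> R[i]).
Hypothesis HV : is_hilbert inner.
Local Notation nsq := (nsq inner).
Variable A : V -> V.
Local Notation M := (closure_range inner A).
Variable P : V -> V.
Hypothesis HP : orth_proj inner M P.

Lemma M_A x : M (A x).
Proof. by move=> e he; exists x; rewrite subrr /Defs.nsq (i0l HV). Qed.

Lemma Ldense_Re w m : (forall x, inner w (A x) = 0) -> M m ->
  complex.Re (inner w m) <= 0.
Proof.
move=> hw hm.
have : complex.Re (inner w m) *+ 2 <= 0.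
  apply: (le0_eps (c := nsq w + 1)) => d hd.
  have [y hy] := hm (d ^+ 2) (exprn_gt0 2 hd).
  have := young HV d w (m - A y).
  rewrite (iBr HV) hw subr0 => hh.
  rewrite -(ler_pM2l hd).
  have : d * (complex.Re (inner w m) *+ 2) = 2 * d * complex.Re (inner w m).
    by rewrite -mulr_natl; ring.
  move=> ->.
  apply: (le_trans hh).
  have := nsq_ge0 HV w.
  nra.
by rewrite pmulrn_lle0.
Qed.

Lemma Ldense w m : (forall x, inner w (A x) = 0) -> M m -> inner w m = 0.
Proof.
move=> hw hm.
have h1 := Ldense_Re hw hm.
have h2 : complex.Re (inner (- w) m) <= 0.
  by apply: Ldense_Re hm => x; rewrite (iNl HV) hw oppr0.
have h3 : complex.Re (inner ('i%C *: w) m) <= 0.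
  by apply: Ldense_Re hm => x; rewrite (iZl HV) hw mulr0.
have h4 : complex.Re (inner (- ('i%C *: w)) m) <= 0.
  by apply: Ldense_Re hm => x; rewrite (iNl HV) (iZl HV) hw mulr0 oppr0.
move: h2 h3 h4; rewrite !(iNl HV) (iZl HV) !ReN Re_i => h2 h3 h4.
apply: cplx_ext => /=; lra.
Qed.

Lemma ext_M m1 m2 : M m1 -> M m2 ->
  (forall m, M m -> inner m1 m = inner m2 m) -> m1 = m2.
Proof.
move=> h1 h2 h; apply/eqP; rewrite -subr_eq0; apply/eqP; apply: (ext_self HV).
have hw : forall m, M m -> inner (m1 - m2) m = 0.
  by move=> m hm; rewrite (iBl HV) h // subrr.
by rewrite (iBr HV) !hw // subrr.
Qed.

Lemma PM x : M (P x). Proof. by case: (HP x). Qed.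
Lemma Pperp x y : M y -> inner (x - P x) y = 0.
Proof. by case: (HP x) => _; apply. Qed.
Lemma P_inner x m : M m -> inner (P x) m = inner x m.
Proof.
move=> hm; have := Pperp x hm; rewrite (iBl HV) => /eqP.
by rewrite subr_eq0 => /eqP.
Qed.

Lemma P_sub x y : P (x - y) = P x - P y.
Proof.
set w := P (x - y) - (P x - P y).
have hw : forall m, M m -> inner w m = 0.
  move=> m hm; rewrite /w !(iBl HV) !P_inner // !(iBl HV).
  by rewrite opprB addrC subrKA subrr.
apply/eqP; rewrite -subr_eq0; apply/eqP; apply: (ext_self HV).
rewrite -/w {2}/w !(iBr HV) !hw ?PM // ?subrr // ?oppr0 ?addr0 ?subr0 //; exact: PM.
Qed.

Lemma P_nsq v : nsq (P v) <= nsq v.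
Proof.
have -> : nsq v = nsq (P v + (v - P v)) by rewrite addrC subrK.
rewrite (nsqD HV) (iC HV (v - P v)) Pperp; last exact: PM.
rewrite conjc0 /= mulr0 addr0 lerDl.
exact: nsq_ge0.
Qed.

Lemma M_sub : (forall x y, A (x - y) = A x - A y) ->
  forall m1 m2, M m1 -> M m2 -> M (m1 - m2).
Proof.
move=> hA m1 m2 h1 h2 e he.
have he4 : 0 < e / 4 by rewrite divr_gt0.
have [y1 hy1] := h1 _ he4; have [y2 hy2] := h2 _ he4.
exists (y1 - y2); rewrite hA.
have -> : m1 - m2 - (A y1 - A y2) = (m1 - A y1) - (m2 - A y2).
  by rewrite !opprB addrACA [RHS]addrACA [- A y1 - m2]addrC.
apply: (le_lt_trans (nsq_sub2 HV _ _)); lra.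
Qed.
End Proj.

Section Lin.
Variables (R : realType) (V : lmodType R[i]) (B : V -> V).
Hypothesis hB : linear B.
Lemma lin_L a x y : B (a *: x + y) = a *: B x + B y.
Proof. exact: hB. Qed.
Lemma lin0 : B 0 = 0.
Proof.
have := lin_L 1 0 0; rewrite scaler0 addr0 scale1r => h.
by apply: (addrI (B 0)); rewrite addr0 -h.
Qed.
Lemma linD x y : B (x + y) = B x + B y.
Proof. by rewrite -[x]scale1r lin_L !scale1r. Qed.
Lemma linZ a x : B (a *: x) = a *: B x.
Proof. by rewrite -[a *: x]addr0 lin_L lin0 addr0. Qed.
Lemma linN x : B (- x) = - B x.
Proof. by rewrite -scaleN1r linZ scaleN1r. Qed.
Lemma linB x y : B (x - y) = B x - B y.
Proof. by rewrite linD linN. Qed.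
End Lin.

Lemma conj_i (R : realType) : conjc ('i%C : R[i]) = - 'i%C.
Proof. by apply: cplx_ext => /=; rewrite ?oppr0. Qed.

Section Sqrt.
Variables (R : realType) (V : lmodType R[i]) (inner : V -> V -> R[i]).
Hypothesis HV : is_hilbert inner.
Local Notation nsq := (nsq inner).
Variable B : V -> V.
Hypothesis hBl : linear B.
Hypothesis hBp : pos_op inner B.

Lemma pos_self x : inner x (B x) = inner (B x) x.
Proof. by rewrite (iC HV); apply: conj_real; case: (hBp x). Qed.

Lemma B_sa x y : inner (B x) y = inner x (B y).
Proof.
pose h x y := inner (B x) y - inner x (B y).
have hc : forall c, conjc c * h x y + c * h y x = 0.
  move=> c.
  have := pos_self (x + c *: y).
  rewrite (linD hBl) (linZ hBl) !(iDl HV, iDr HV, iZl HV, iZr HV).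
  rewrite (pos_self x) (pos_self y) /h => /eqP; rewrite -subr_eq0 => /eqP e.
  have := congr1 (fun t => - t) e; rewrite oppr0 /= => <-; ring.
have h1 := hc 1; rewrite conjc1 !mul1r in h1.
have h2 := hc 'i%C; rewrite conj_i in h2.
have e : h y x = h x y.
  have : 'i%C * (h y x - h x y) = 0 by rewrite -h2; ring.
  move/eqP; rewrite mulf_eq0 => /orP [/eqP hi|]; first by move: hi => /eqP; rewrite eq_complex /= oner_eq0 andbF.
  by rewrite subr_eq0 => /eqP.
have : 2%:R * h x y = 0 by rewrite -h1 e; ring.
move/eqP; rewrite mulf_eq0 pnatr_eq0 /= => /eqP e2.
by apply/eqP; rewrite -subr_eq0; apply/eqP.
Qed.
End Sqrt.

Section SqrtProj.
Variables (R : realType) (V : lmodType R[i]) (inner : V -> V -> R[i]).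
Hypothesis HV : is_hilbert inner.
Local Notation nsq := (nsq inner).
Variables (A B : V -> V).
Hypothesis hBl : linear B.
Hypothesis hBp : pos_op inner B.
Hypothesis hA : forall x, B (B x) = A x.
Local Notation M := (closure_range inner A).
Variable P : V -> V.
Hypothesis HP : orth_proj inner M P.

Lemma innerA x y : inner (A x) y = inner (B x) (B y).
Proof. by rewrite -hA (B_sa HV hBl hBp). Qed.

Lemma nsqB x : nsq (B x) = complex.Re (inner (A x) x).
Proof. by rewrite /Defs.nsq -hA [in RHS](B_sa HV hBl hBp). Qed.

Lemma BP v : B (P v) = B v.
Proof.
set w := v - P v.
have : B w = 0.
  apply: (nsq_eq0 HV); rewrite nsqB /w (iC HV) (Pperp HP); last exact: (M_A HV A).
  by rewrite conjc0.
by rewrite /w (linB hBl) => /eqP; rewrite subr_eq0 => /eqP.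
Qed.

Lemma B_M u : M (B u).
Proof.
set w := B u - P (B u).
have hw : B w = 0 by rewrite /w (linB hBl) BP subrr.
have : w = 0.
  apply: (ext_self HV).
  rewrite {2}/w (iBr HV) -(B_sa HV hBl hBp) hw (i0l HV) (Pperp HP) ?subrr //.
  exact: (PM HP).
move/eqP; rewrite subr_eq0 => /eqP ->; exact: (PM HP).
Qed.

Lemma Kd m1 m2 : M m1 -> M m2 -> B m1 = B m2 -> m1 = m2.
Proof.
move=> h1 h2 e.
set w := m1 - m2.
have hw : forall x, inner w (A x) = 0.
  by move=> x; rewrite -hA -(B_sa HV hBl hBp) /w (linB hBl) e subrr (i0l HV).
have : w = 0.
  apply: (ext_self HV).
  by rewrite {2}/w (iBr HV) !(Ldense HV hw) // subrr.
by move/eqP; rewrite subr_eq0 => /eqP.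
Qed.
End SqrtProj.

Section Ops.
Variables (R : realType) (V : lmodType R[i]) (inner : V -> V -> R[i]).
Hypothesis HV : is_hilbert inner.
Local Notation nsq := (nsq inner).
Variable T : {linear V -> V}.
Variable Tstar : V -> V.
Hypothesis HTs : is_adjoint inner T Tstar.

Lemma Tstar_l u y : inner (Tstar u) y = inner u (T y).
Proof. by rewrite (iC HV) -HTs -(iC HV). Qed.

Lemma iterTs k u y : inner (iter k Tstar u) y = inner u (iter k T y).
Proof.
elim: k u y => [|k IH] u y //=.
by rewrite Tstar_l IH -iterSr.
Qed.

Definition gg x y k := inner (iter k T x) (iter k T y).
Definition fA n x y := inner (Aop T Tstar n x) y.

Lemma Aop_formula n x y : fA n x y =
  - \sum_(k < n.+1) ((-1) ^+ k * ('C(n, k))%:R) * gg x y k.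
Proof.
rewrite /fA /Aop (iNl HV) (isum_l HV); congr (- _); apply: eq_bigr => k _.
by rewrite (iZl HV) iterTs.
Qed.

Ltac fAsimp := rewrite Aop_formula !big_ord_recr big_ord0 /= ?bin0 ?binn ?bin1; ring.
Lemma bin32 : 'C(3, 2) = 3%N. Proof. by []. Qed.
Lemma bin42 : 'C(4, 2) = 6%N. Proof. by []. Qed.
Lemma bin43 : 'C(4, 3) = 4%N. Proof. by []. Qed.

Lemma fA1 x y : fA 1 x y = gg x y 1 - gg x y 0.
Proof. fAsimp. Qed.
Lemma fA2 x y : fA 2 x y = - (gg x y 0 - 2%:R * gg x y 1 + gg x y 2).
Proof. fAsimp. Qed.
Lemma fA3 x y : fA 3 x y = - (gg x y 0 - 3%:R * gg x y 1 + 3%:R * gg x y 2 - gg x y 3).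
Proof. rewrite Aop_formula !big_ord_recr big_ord0 /= bin0 binn bin1 bin32; ring. Qed.
Lemma fA4 x y : fA 4 x y = - (gg x y 0 - 4%:R * gg x y 1 + 6%:R * gg x y 2
   - 4%:R * gg x y 3 + gg x y 4).
Proof. rewrite Aop_formula !big_ord_recr big_ord0 /= bin0 binn bin1 bin42 bin43; ring. Qed.

Lemma ggT x y k : gg (T x) (T y) k = gg x y k.+1.
Proof. by rewrite /gg -!iterSr. Qed.

Lemma fA_rec1 x y : fA 2 x y = fA 1 x y - fA 1 (T x) (T y).
Proof. rewrite fA2 !fA1 !ggT; ring. Qed.
Lemma fA_rec2 x y : fA 3 x y = fA 2 x y - fA 2 (T x) (T y).
Proof. rewrite fA3 !fA2 !ggT; ring. Qed.
Lemma fA_rec3 x y : fA 4 x y = fA 3 x y - fA 3 (T x) (T y).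
Proof. rewrite fA4 !fA3 !ggT; ring. Qed.

Lemma iterT_B k x y : iter k T (x - y) = iter k T x - iter k T y.
Proof. by elim: k => //= k ->; rewrite linearB. Qed.

Lemma Aop_sub n x y : Aop T Tstar n (x - y) = Aop T Tstar n x - Aop T Tstar n y.
Proof.
apply: (ext HV) => z; rewrite (iBl HV).
have e := Aop_formula; rewrite /fA in e; rewrite !e.
have gB : forall k, gg (x - y) z k = gg x z k - gg y z k.
  by move=> k; rewrite /gg iterT_B (iBl HV).
under eq_bigr do rewrite gB mulrBr.
rewrite sumrB; ring.
Qed.
End Ops.

Section Seq.
Variables (R : realType) (V : lmodType R[i]) (inner : V -> V -> R[i]).
Hypothesis HV : is_hilbert inner.
Variable T : {linear V -> V}.
Variable Tstar : V -> V.
Hypothesis HTs : is_adjoint inner T Tstar.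
Hypothesis Hche : completely_hyperexpansive inner T Tstar.

Definition qq n x := complex.Re (fA inner T Tstar n x x).

Lemma q_ge0 n x : (1 <= n)%N -> 0 <= qq n x.
Proof. by move=> hn; case: (Hche hn x). Qed.

Lemma q_rec1 x : qq 2 x = qq 1 x - qq 1 (T x).
Proof. by rewrite /qq (fA_rec1 HV HTs) ReB. Qed.
Lemma q_rec2 x : qq 3 x = qq 2 x - qq 2 (T x).
Proof. by rewrite /qq (fA_rec2 HV HTs) ReB. Qed.
Lemma q_rec3 x : qq 4 x = qq 3 x - qq 3 (T x).
Proof. by rewrite /qq (fA_rec3 HV HTs) ReB. Qed.

Lemma q2T_le x : qq 2 (T x) <= qq 2 x.
Proof. have := q_ge0 x (isT : (1 <= 3)%N); rewrite q_rec2; lra. Qed.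

Lemma q_bound j v : j%:R * qq 2 (iter j T v) + qq 1 (iter j T v) <= qq 1 v.
Proof.
elim: j => [|j IH]; first by rewrite /= mul0r add0r.
apply: le_trans IH.
rewrite iterS.
have h1 := q_rec1 (iter j T v).
have h2 := q2T_le (iter j T v).
have h3 : 0 <= j%:R :> R by [].
rewrite -natr1 (mulrDl _ _ (qq 2 _)) mul1r.
have : j%:R * qq 2 (T (iter j T v)) <= j%:R * qq 2 (iter j T v) by exact: ler_wpM2l.
lra.
Qed.

Lemma q3_0 d : qq 3 d = 0 -> qq 2 d = 0.
Proof.
move=> h3.
have hall : forall j, qq 3 (iter j T d) = 0.
  elim=> [//|j IH]; rewrite iterS.
  have := q_rec3 (iter j T d); have := q_ge0 (iter j T d) (isT : (1 <= 4)%N).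
  have := q_ge0 (T (iter j T d)) (isT : (1 <= 3)%N). lra.
have hc : forall j, qq 2 (iter j T d) = qq 2 d.
  elim=> [//|j IH]; rewrite iterS.
  have := q_rec2 (iter j T d); rewrite hall IH; lra.
apply/eqP; rewrite eq_le q_ge0 // andbT.
apply: (le0_archi (c := qq 1 d)) => n.
have := q_bound n d; rewrite hc.
have := q_ge0 (iter n T d) (isT : (1 <= 1)%N); lra.
Qed.
End Seq.

Lemma le0_eps1 (R : realType) (x c : R) : 0 <= c ->
  (forall d : R, 0 < d -> d <= 1 -> x <= d * c) -> x <= 0.
Proof.
move=> hc h; apply: le0_eps => d hd.
case: (lerP d 1) => hd1; first exact: h.
apply: (le_trans (h 1 ltr01 (lexx _))).
by rewrite ler_wpM2r // ltW.
Qed.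

Section Main.
Variables (R : realType) (V : lmodType R[i]) (inner : V -> V -> R[i]).
Hypothesis HV : is_hilbert inner.
Local Notation nsq := (nsq inner).
Variable T : {linear V -> V}.
Variable Tstar : V -> V.
Hypothesis HTb : bounded inner T.
Hypothesis HTs : is_adjoint inner T Tstar.
Hypothesis Hche : completely_hyperexpansive inner T Tstar.
Local Notation A2 := (Aop T Tstar 2).
Local Notation A3 := (Aop T Tstar 3).
Local Notation M := (closure_range inner A2).
Variable B : V -> V.
Hypothesis hBl : linear B.
Hypothesis hBp : pos_op inner B.
Hypothesis hB2 : forall x, B (B x) = A2 x.
Hypothesis hreg2 : forall x, A2 (T x) = B (T (B x)).
Variable P : V -> V.
Hypothesis HP : orth_proj inner M P.
Local Notation S := (fun x => P (T x)).

Lemma S_sub x y : S (x - y) = S x - S y.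
Proof. by rewrite /= linearB (P_sub HV HP). Qed.

Lemma S_M x : M (S x).
Proof. exact: (PM HP). Qed.

Lemma SB v : S (B v) = B (T v).
Proof.
apply: (Kd HV hBl hBp hB2); first exact: (PM HP).
  exact: (B_M HV hBl hBp hB2 HP).
by rewrite /= (BP HV hBl hBp hB2 HP) hB2 hreg2.
Qed.

Lemma BS v : B (S v) = B (T v).
Proof. by rewrite /= (BP HV hBl hBp hB2 HP). Qed.

Lemma nsqB2 v : nsq (B v) = qq inner T Tstar 2 v.
Proof. by rewrite (nsqB HV hBl hBp hB2). Qed.

Lemma SB_contr v : nsq (S (B v)) <= nsq (B v).
Proof. by rewrite /= SB !nsqB2 (q2T_le HV HTs Hche). Qed.

Lemma S_bounded : exists K : R, 0 <= K /\ forall x, nsq (S x) <= K * nsq x.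
Proof.
case: HTb => K hK; exists `|K|; split => // x.
apply: (le_trans (P_nsq HV HP _)); apply: (le_trans (hK x)).
by rewrite ler_wpM2r ?(nsq_ge0 HV) // ler_norm.
Qed.

Lemma S_contr y : M y -> nsq (S y) <= nsq y.
Proof.
move=> hy.
have [K [hK0 hK]] := S_bounded.
set X := nsq (S y); set Y := nsq y.
have hY : 0 <= Y := nsq_ge0 HV y.
rewrite -subr_le0.
apply: (le0_eps1 (c := 3 * Y + 4 + 2 * K)); first lra.
move=> d hd hd1.
have [x hx] := hy (d ^+ 2) (exprn_gt0 2 hd).
set u := A2 x in hx.
set E := nsq (y - u) in hx.
have hE0 : 0 <= E := nsq_ge0 HV _.
have hSy : S y = S u + S (y - u) by rewrite S_sub addrC subrK.
set na := nsq (S u); set nb := nsq (S (y - u)).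
have hna0 : 0 <= na := nsq_ge0 HV _.
have hnb0 : 0 <= nb := nsq_ge0 HV _.
have hX : d * X <= (d + d ^+ 2) * na + (1 + d) * nb.
  rewrite /X hSy (nsqD HV).
  have := young HV d (S u) (S (y - u)).
  rewrite -/na -/nb; nra.
set U := nsq u.
have hU : d * U <= (d + d ^+ 2) * Y + (1 + d) * E.
  rewrite /U.
  have -> : u = y + - (y - u) by rewrite opprB addrC subrK.
  rewrite (nsqD HV) (nsqN HV).
  have := young HV d y (- (y - u)).
  rewrite (nsqN HV) -/E -/Y; nra.
have hna : na <= U by rewrite /na /U /u -hB2 SB_contr.
have hnb : nb <= K * E := hK _.
have h1 : d * X <= (1 + d) * (d * U) + (1 + d) * (K * E).
  apply: (le_trans hX).
  have : (d + d ^+ 2) * na <= (d + d ^+ 2) * U.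
    by rewrite ler_wpM2l // addr_ge0 ?exprn_ge0 ?ltW.
  have : (1 + d) * nb <= (1 + d) * (K * E).
    by rewrite ler_wpM2l // addr_ge0 ?ltW.
  nra.
have h2 : (1 + d) * (d * U) <= (1 + d) * ((d + d ^+ 2) * Y + (1 + d) * E).
  by rewrite ler_wpM2l // addr_ge0 ?ltW.
have hEd : E <= d ^+ 2 by apply: ltW.
have h3 : (1 + d) * ((1 + d) * E) <= 4 * d ^+ 2.
  have : (1 + d) * (1 + d) <= 4 by nra.
  nra.
have h4 : (1 + d) * (K * E) <= 2 * K * d ^+ 2.
  have : (1 + d) * E <= 2 * d ^+ 2 by nra.
  nra.
have h5 : (1 + d) * ((d + d ^+ 2) * Y) <= d * Y + 3 * d ^+ 2 * Y.
  have hp : 0 <= d ^+ 2 * Y * (1 - d).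
    apply: mulr_ge0; last by rewrite subr_ge0.
    by apply: mulr_ge0 => //; apply: exprn_ge0; apply: ltW.
  lra.
rewrite -(ler_pM2l hd).
nra.
Qed.

Lemma BSw w : B (S w) = S (B w).
Proof. by rewrite BS /= SB. Qed.

Lemma A2_sub x y : A2 (x - y) = A2 x - A2 y.
Proof. exact: (Aop_sub HV HTs). Qed.

Lemma M_subA z x : M z -> M (z - A2 x).
Proof. by move=> hz; apply: (M_sub HV A2_sub hz (M_A HV _ x)). Qed.

Lemma iterS_B n v : iter n S (B v) = B (iter n T v).
Proof. by elim: n => //= n ->; rewrite SB. Qed.

Lemma iterS_sub n x y : iter n S (x - y) = iter n S x - iter n S y.
Proof. by elim: n => //= n ->; rewrite S_sub. Qed.

Lemma iterS_M n x : M x -> M (iter n S x).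
Proof. by case: n => //= n _; exact: S_M. Qed.

Lemma iterS_contr n x : M x -> nsq (iter n S x) <= nsq x.
Proof.
move=> hx; elim: n => //= n IH.
apply: le_trans IH; apply: S_contr; exact: iterS_M.
Qed.

Lemma cni : completely_non_isometric_on inner M S.
Proof.
move=> N _ _ hNM hNS hNiso z hz.
have hiso : forall n, N (iter n S z) /\ nsq (iter n S z) = nsq z.
  elim=> [//|n [hN IH]] /=; split; first exact: hNS.
  by rewrite hNiso.
apply: (nsq_eq0 HV); apply/eqP; rewrite eq_le nsq_ge0 // andbT.
apply: (le0_eps (c := 2)) => e he.
have hzM := hNM z hz.
have [x hx] := hzM e he.
set u := A2 x in hx.
rewrite -subr_le0.
apply: (le0_archi (c := 2 * qq inner T Tstar 1 (B x))) => n.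
have [_ <-] := hiso n.
have -> : iter n S z = iter n S (z - u) + iter n S u by rewrite iterS_sub subrK.
have h1 := nsq_add2 HV (iter n S (z - u)) (iter n S u).
have h2 : nsq (iter n S (z - u)) <= e.
  apply: le_trans (ltW hx); apply: iterS_contr; exact: M_subA.
have h3 : nsq (iter n S u) = qq inner T Tstar 2 (iter n T (B x)).
  by rewrite /u -hB2 iterS_B nsqB2.
have h4 := q_bound HV HTs Hche n (B x).
have h5 := q_ge0 Hche (iter n T (B x)) (isT : (1 <= 1)%N).
have h6 := q_ge0 Hche (iter n T (B x)) (isT : (1 <= 2)%N).
have hn : 0 <= n%:R :> R by [].
rewrite h3 in h1.
nra.
Qed.

Variable B3 : V -> V.
Hypothesis hB3l : linear B3.
Hypothesis hB3p : pos_op inner B3.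
Hypothesis hB3 : forall x, B3 (B3 x) = A3 x.
Hypothesis hreg3 : forall x, A3 (T x) = B3 (T (B3 x)).

Lemma A3_inner v y : inner (A3 v) y = inner (B v) (B y) - inner (B (T v)) (B (T y)).
Proof.
have := fA_rec2 HV HTs v y; rewrite /fA => ->.
by rewrite !(innerA HV hBl hBp hB2).
Qed.

Lemma A3_ker w : B w = 0 -> A3 w = 0.
Proof.
move=> hw.
have hTw : B (T w) = 0.
  apply: (nsq_eq0 HV); apply/eqP; rewrite eq_le nsq_ge0 // andbT.
  rewrite nsqB2; apply: le_trans (q2T_le HV HTs Hche w) _.
  by rewrite -nsqB2 hw /Defs.nsq (i0l HV).
by apply: (ext HV) => y; rewrite A3_inner hw hTw !(i0l HV) subrr.
Qed.

Lemma B3P v : B3 (P v) = B3 v.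
Proof.
set w := v - P v.
have hw : B w = 0 by rewrite /w (linB hBl) (BP HV hBl hBp hB2 HP) subrr.
have : B3 w = 0.
  apply: (nsq_eq0 HV); rewrite (nsqB HV hB3l hB3p hB3) A3_ker // (i0l HV).
  by [].
by rewrite /w (linB hB3l) => /eqP; rewrite subr_eq0 => /eqP.
Qed.

Lemma B3_M u : M (B3 u).
Proof.
set w := B3 u - P (B3 u).
have hw : B3 w = 0 by rewrite /w (linB hB3l) B3P subrr.
have : w = 0.
  apply: (ext_self HV).
  rewrite {2}/w (iBr HV) -(B_sa HV hB3l hB3p) hw (i0l HV) (Pperp HP) ?subrr //.
  exact: (PM HP).
move/eqP; rewrite subr_eq0 => /eqP ->; exact: (PM HP).
Qed.

Lemma A3_inj d1 d2 : M d1 -> M d2 -> A3 d1 = A3 d2 -> d1 = d2.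
Proof.
move=> h1 h2 e.
have h0 : A3 (d1 - d2) = 0 by rewrite (Aop_sub HV HTs) e subrr.
have hq3 : qq inner T Tstar 3 (d1 - d2) = 0 by rewrite /qq /fA h0 (i0l HV).
have hq2 := q3_0 HV HTs Hche hq3.
apply: (Kd HV hBl hBp hB2) => //.
have : B (d1 - d2) = 0 by apply: (nsq_eq0 HV); rewrite nsqB2.
by rewrite (linB hBl) => /eqP; rewrite subr_eq0 => /eqP.
Qed.

Lemma B3T v : B3 (T v) = S (B3 v).
Proof.
apply: A3_inj; [exact: B3_M | exact: (PM HP) |].
rewrite -!hB3 /= B3P; congr (B3 _); by rewrite hB3 hreg3.
Qed.

Lemma A3T v : A3 (T v) = S (A3 v).
Proof. by rewrite hreg3 B3T -hB3 -B3T. Qed.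

Section WithSstar.
Variable Sstar : V -> V.
Hypothesis hSsM : maps_into M Sstar.
Hypothesis hSs : forall x y, M x -> M y -> inner (S x) y = inner x (Sstar y).

Let BM u : M (B u) := B_M HV hBl hBp hB2 HP u.
Let Bsa x y : inner (B x) y = inner x (B y) := B_sa HV hBl hBp x y.

Lemma BSstar m : M m -> B (Sstar m) = Sstar (B m).
Proof.
move=> hm; apply: (ext_M HV); [exact: BM | apply: hSsM; exact: BM |].
move=> m' hm'.
rewrite Bsa (iC HV (B m')) -(hSs (BM m') hm) /= SB -BS Bsa.
by rewrite (hSs hm' (BM m)) -(iC HV).
Qed.

Definition DD m := m - Sstar (S m).

Lemma D_M m : M m -> M (DD m).
Proof.
move=> hm; apply: (M_sub HV A2_sub) => //; apply: hSsM; exact: S_M.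
Qed.

Lemma Dsa m m' : M m -> M m' -> inner (DD m) m' = inner m (DD m').
Proof.
move=> hm hm'; rewrite /DD (iBl HV) (iBr HV); congr (_ - _).
rewrite (iC HV m') -(hSs hm' (S_M m)) -(iC HV).
by rewrite (hSs hm (S_M m')).
Qed.

Lemma A3_BDB v : A3 v = B (DD (B v)).
Proof.
apply: (ext HV) => y.
rewrite A3_inner [RHS]Bsa (Dsa (BM v) (BM y)) /DD (iBr HV).
by rewrite -(hSs (BM v) (S_M (B y))) /= !SB.
Qed.

Lemma BD m : M m -> B (DD m) = DD (B m).
Proof.
move=> hm; rewrite /DD (linB hBl) BSstar; last exact: S_M.
by rewrite BSw.
Qed.

Lemma key v : DD (S (B v)) = S (DD (B v)).
Proof.
apply: (Kd HV hBl hBp hB2); [exact: D_M (S_M _) | exact: S_M |].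
rewrite /= SB -A3_BDB BSw -A3_BDB.
exact: A3T.
Qed.

Lemma key2 m : M m -> DD (S m) = S (DD m).
Proof.
move=> hm; apply: (Kd HV hBl hBp hB2); [exact: D_M (S_M _) | exact: S_M |].
rewrite BD; last exact: S_M.
by rewrite BSw BSw BD // key.
Qed.

Lemma quasi_step z : M z -> S (Sstar (S z)) = Sstar (S (S z)).
Proof.
move=> hz; have := key2 hz; rewrite /DD S_sub => /eqP.
by rewrite (inj_eq (addrI _)) eqr_opp => /eqP ->.
Qed.


End WithSstar.

Lemma quasi : quasinormal_on inner M S.
Proof. by move=> Sstar [hSsM hSs] x hx; exact: (quasi_step hSsM hSs hx). Qed.
End Main.

Theorem corollary4p6 (R : realType) (V : lmodType R[i]) (inner : V -> V -> R[i])
  (HV : is_hilbert inner)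
  (T : {linear V -> V}) (Tstar : V -> V)
  (HTb : bounded inner T) (HTs : is_adjoint inner T Tstar)
  (Hche : completely_hyperexpansive inner T Tstar)
  (Hreg : forall j, (1 <= j <= 3)%N -> regular inner (Aop T Tstar j) T)
  (P : V -> V)
  (HP : orth_proj inner (closure_range inner (Aop T Tstar 2)) P) :
  let M := closure_range inner (Aop T Tstar 2) in
  let S := fun x => P (T x) in
  [/\ maps_into M S,
      contraction_on inner M S,
      quasinormal_on inner M S &
      completely_non_isometric_on inner M S].
Proof.
move=> M S.
have [B [[hBl [_ [hBp hB2]]] hreg2]] := Hreg 2%N isT.
have [B3 [[hB3l [_ [hB3p hB3]]] hreg3]] := Hreg 3%N isT.
split.
- by move=> x _; exact: (PM HP).
- by move=> y hy; exact: (S_contr HV HTb HTs Hche hBl hBp hB2 hreg2 HP hy).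
- exact: (quasi HV HTs Hche hBl hBp hB2 hreg2 HP hB3l hB3p hB3 hreg3).
- exact: (cni HV HTb HTs Hche hBl hBp hB2 hreg2 HP).
Qed.
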